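(* Let $a_1,a_2>0$, let $\omega=\{\mathbf y=(y_1,y_2)\in\mathbb R^2:\ y_1^2/a_1^2+y_2^2/a_2^2<1\}$ be the open elliptical domain with boundary $\Gamma=\partial\omega$, set $s=a_2/a_1$, and define $$\theta(\mathbf y)=1-\frac{y_1^2}{a_1^2}-\frac{y_2^2}{a_2^2},\qquad \bar p(\mathbf y)=p_0\,\theta(\mathbf y)^2,\qquad \rho(\mathbf y)=\Bigl(\frac{s\,y_1^2}{a_1^2}+\frac{y_2^2}{s\,a_2^2}\Bigr)\theta(\mathbf y),$$ where $p_0>0$ is a constant. Let $m>0$, $h_1,h_2>0$, $E_1,E_2>0$ be constants, and let $\tilde H_1,\tilde H_2$ be continuously differentiable real functions on $\overline{\omega}$. Suppose $\tilde p\in C^2(\overline\omega)$ solves $$-m^{-1}\Delta_y\tilde p(\mathbf y)=\sum_{\alpha=1}^2\frac{3h_\alpha^2}{E_\alpha}\nabla_y\cdot\bigl(\tilde H_\alpha(\mathbf y)\nabla_y\bar p(\mathbf y)\bigr),\quad \mathbf y\in\omega,\qquad \tilde p(\mathbf y)=0,\quad \mathbf y\in\Gamma.$$ Then $$\iint_\omega\tilde p(\mathbf y)\,d\mathbf y=0\quad\text{if and only if}\quad \sum_{\alpha=1}^2\frac{h_\alpha^2}{E_\alpha}\iint_\omega\tilde H_\alpha(\mathbf y)\,\rho(\mathbf y)\,d\mathbf y=0.$$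
   Context: $\Delta_y=\partial^2/\partial y_1^2+\partial^2/\partial y_2^2$ is the Laplacian and $\nabla_y=(\partial/\partial y_1,\partial/\partial y_2)$ the gradient in the plane variables $\mathbf y=(y_1,y_2)$; the dot denotes the Euclidean scalar product. In the application, $\tilde p$ is the first-order variation of the contact pressure caused by small thickness variations $\tilde H_\alpha$ of two thin incompressible elastic layers (thicknesses $h_\alpha$, Young's moduli $E_\alpha$, $m=(E_1^{-1}h_1^3+E_2^{-1}h_2^3)^{-1}$), and $\bar p$ is the unperturbed pressure on the elliptical contact region $\omega$. *)

(* Defs.v *)
From Stdlib Require Import Reals.
From Coquelicot Require Import Coquelicot.
Open Scope R_scope.

Definition ellq (a1 a2 : R) (y : R * R) : R :=
  (fst y) ^ 2 / a1 ^ 2 + (snd y) ^ 2 / a2 ^ 2.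

Definition in_omega (a1 a2 : R) (y : R * R) : Prop := ellq a1 a2 y < 1.
Definition in_closure (a1 a2 : R) (y : R * R) : Prop := ellq a1 a2 y <= 1.
Definition in_Gamma (a1 a2 : R) (y : R * R) : Prop := ellq a1 a2 y = 1.

Definition theta (a1 a2 : R) (y : R * R) : R := 1 - ellq a1 a2 y.
Definition pbar (a1 a2 p0 : R) (y : R * R) : R := p0 * (theta a1 a2 y) ^ 2.
Definition rho (a1 a2 : R) (y : R * R) : R :=
  let s := a2 / a1 in
  (s * (fst y) ^ 2 / a1 ^ 2 + (snd y) ^ 2 / (s * a2 ^ 2)) * theta a1 a2 y.

Definition d1 (f : R * R -> R) (y : R * R) : R :=
  Derive (fun t => f (t, snd y)) (fst y).
Definition d2 (f : R * R -> R) (y : R * R) : R :=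
  Derive (fun t => f (fst y, t)) (snd y).

Definition lap (f : R * R -> R) (y : R * R) : R := d1 (d1 f) y + d2 (d2 f) y.
Definition div_H_grad (H g : R * R -> R) (y : R * R) : R :=
  d1 (fun z => H z * d1 g z) y + d2 (fun z => H z * d2 g z) y.

Definition cont_on (D : R * R -> Prop) (F : R * R -> R) : Prop :=
  forall z, D z -> filterlim F (within D (locally z)) (locally (F z)).

Definition partials_in_omega (a1 a2 : R) (f g1 g2 : R * R -> R) : Prop :=
  forall z, in_omega a1 a2 z ->
    is_derive (fun t => f (t, snd z)) (fst z) (g1 z) /\
    is_derive (fun t => f (fst z, t)) (snd z) (g2 z).

(* C^1(closure omega): f continuous on the closure, its partial derivatives
   exist in omega and extend continuously to the closure. *)
Definition C1_closure (a1 a2 : R) (f : R * R -> R) : Prop :=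
  cont_on (in_closure a1 a2) f /\
  exists g1 g2, partials_in_omega a1 a2 f g1 g2 /\
    cont_on (in_closure a1 a2) g1 /\ cont_on (in_closure a1 a2) g2.

(* C^2(closure omega): all partial derivatives up to order 2 exist in omega
   and extend continuously to the closure. *)
Definition C2_closure (a1 a2 : R) (f : R * R -> R) : Prop :=
  cont_on (in_closure a1 a2) f /\
  exists g1 g2, partials_in_omega a1 a2 f g1 g2 /\
    C1_closure a1 a2 g1 /\ C1_closure a1 a2 g2.

(* Double integral over the ellipse omega, as an iterated Riemann integral
   (for functions continuous on the closure this is the area integral). *)
Definition ell_bound (a1 a2 y1 : R) : R := a2 * sqrt (1 - y1 ^ 2 / a1 ^ 2).
Definition int_omega (a1 a2 : R) (f : R * R -> R) : R :=
  RInt (fun y1 => RInt (fun y2 => f (y1, y2))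
                       (- ell_bound a1 a2 y1) (ell_bound a1 a2 y1)) (- a1) a1.

(* Main.v *)
Require Import Defs.
From Stdlib Require Import Reals Lra Classical ClassicalEpsilon.
From Coquelicot Require Import Coquelicot.
Open Scope R_scope.



Lemma cplus {U : UniformSpace} (f g : U -> R) (z : U) : continuous f z -> continuous g z -> continuous (fun x => f x + g x) z.
Proof. intros; exact (continuous_plus f g z H H0). Qed.
Lemma cmult {U : UniformSpace} (f g : U -> R) (z : U) : continuous f z -> continuous g z -> continuous (fun x => f x * g x) z.
Proof. intros; exact (continuous_mult f g z H H0). Qed.
Lemma copp {U : UniformSpace} (f : U -> R) (z : U) : continuous f z -> continuous (fun x => - f x) z.
Proof. intros; exact (continuous_opp f z H). Qed.
Lemma cminus {U : UniformSpace} (f g : U -> R) (z : U) : continuous f z -> continuous g z -> continuous (fun x => f x - g x) z.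
Proof. intros; exact (continuous_minus f g z H H0). Qed.
Lemma cconst {U : UniformSpace} (c : R) z : continuous (fun _ : U => c) z.
Proof. apply continuous_const. Qed.
Lemma cid z : continuous (fun x : R => x) z.
Proof. apply continuous_id. Qed.
Lemma cinv {U : UniformSpace} (f : U -> R) (z : U) : continuous f z -> f z <> 0 -> continuous (fun x => / f x) z.
Proof. intros. apply (continuous_comp f (fun x => / x)); auto. apply continuous_Rinv; auto. Qed.
Lemma csqrt {U : UniformSpace} (f : U -> R) (z : U) : continuous f z -> continuous (fun x => sqrt (f x)) z.
Proof. intros. apply (continuous_comp f sqrt); auto. apply continuous_sqrt. Qed.
Lemma cabs {U : UniformSpace} (f : U -> R) (z : U) : continuous f z -> continuous (fun x => Rabs (f x)) z.
Proof. intros. apply (continuous_comp f Rabs); auto. apply continuous_Rabs. Qed.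
Lemma cdiv {U : UniformSpace} (f g : U -> R) (z : U) : continuous f z -> continuous g z -> g z <> 0 -> continuous (fun x => f x / g x) z.
Proof. intros. unfold Rdiv. apply cmult; auto. apply cinv; auto. Qed.
Lemma cpow {U : UniformSpace} (f : U -> R) n z : continuous f z -> continuous (fun x => f x ^ n) z.
Proof. intros. induction n; simpl. apply cconst. apply cmult; auto. Qed.


Lemma cfst (z : R * R) : continuous (fun y : R*R => fst y) z.
Proof. destruct z; apply continuous_fst. Qed.
Lemma csnd (z : R * R) : continuous (fun y : R*R => snd y) z.
Proof. destruct z; apply continuous_snd. Qed.

Ltac cont1 := match goal with
  | |- continuous (fun _ => ?c) _ => apply cconst
  | |- continuous (fun _ => _ + _) _ => apply cplus
  | |- continuous (fun _ => _ - _) _ => apply cminus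
  | |- continuous (fun _ => _ * _) _ => apply cmult
  | |- continuous (fun _ => - _) _ => apply copp
  | |- continuous (fun _ => _ ^ _) _ => apply cpow
  | |- continuous (fun _ => sqrt _) _ => apply csqrt
  | |- continuous (fun _ => Rabs _) _ => apply cabs
  | |- continuous (fun y => fst y) _ => apply cfst
  | |- continuous fst _ => apply cfst
  | |- continuous snd _ => apply csnd
  | |- continuous (fun y => snd y) _ => apply csnd
  | |- continuous (fun y => y) _ => apply cid
  end.
Ltac cont := repeat cont1.

Definition qf (a1 a2 : R) (y : R * R) : R := Rmax 1 (sqrt (ellq a1 a2 y)).
Definition Pr (a1 a2 : R) (y : R * R) : R * R :=
  (fst y / qf a1 a2 y, snd y / qf a1 a2 y).

Lemma ellq_ge0 a1 a2 y : 0 < a1 -> 0 < a2 -> 0 <= ellq a1 a2 y.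
Proof.
  intros. unfold ellq. assert (0 < a1^2) by (apply pow_lt; auto).
  assert (0 < a2^2) by (apply pow_lt; auto).
  assert (0 <= fst y ^2) by (apply pow2_ge_0). assert (0 <= snd y ^2) by (apply pow2_ge_0).
  unfold Rdiv. apply Rplus_le_le_0_compat; apply Rmult_le_pos; auto; left; apply Rinv_0_lt_compat; auto.
Qed.

Lemma qf_ge1 a1 a2 y : 1 <= qf a1 a2 y.
Proof. unfold qf. apply Rmax_l. Qed.

Lemma ellq_scale a1 a2 y c : 0 < a1 -> 0 < a2 -> c <> 0 ->
  ellq a1 a2 (fst y / c, snd y / c) = ellq a1 a2 y / c ^ 2.
Proof. intros. unfold ellq; simpl. field. split; lra. Qed.

Lemma Pr_in a1 a2 y : 0 < a1 -> 0 < a2 -> in_closure a1 a2 (Pr a1 a2 y).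
Proof.
  intros. unfold in_closure, Pr. pose proof (qf_ge1 a1 a2 y).
  rewrite ellq_scale; try lra. pose proof (ellq_ge0 a1 a2 y H H0).
  unfold qf in *. destruct (Rle_dec (ellq a1 a2 y) 1).
  - assert (sqrt (ellq a1 a2 y) <= 1). { rewrite <- sqrt_1. apply sqrt_le_1_alt; auto. }
    rewrite Rmax_left by auto. simpl. lra.
  - assert (1 <= sqrt (ellq a1 a2 y)). { rewrite <- sqrt_1. apply sqrt_le_1_alt; lra. }
    rewrite Rmax_right by auto. rewrite <- Rsqr_pow2, Rsqr_sqrt by lra.
    unfold Rdiv; rewrite Rinv_r; lra.
Qed.

Lemma Pr_id a1 a2 y : 0 < a1 -> 0 < a2 -> in_closure a1 a2 y -> Pr a1 a2 y = y.
Proof.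
  intros. unfold Pr, qf. unfold in_closure in H1.
  assert (sqrt (ellq a1 a2 y) <= 1). { rewrite <- sqrt_1. apply sqrt_le_1_alt; auto. }
  rewrite Rmax_left by auto. destruct y; simpl. f_equal; field.
Qed.

Lemma Rmax1_eq s : Rmax 1 s = (1 + s + Rabs (s - 1)) / 2.
Proof. unfold Rmax. destruct (Rle_dec 1 s). rewrite Rabs_right; lra. rewrite Rabs_left; lra. Qed.

Lemma ellq_cont a1 a2 z : continuous (ellq a1 a2) z.
Proof. unfold ellq, Rdiv; cont. Qed.

Lemma qf_cont a1 a2 z : continuous (qf a1 a2) z.
Proof.
  apply continuous_ext with (f := fun y => (1 + sqrt (ellq a1 a2 y) + Rabs (sqrt (ellq a1 a2 y) - 1)) / 2).
  intros; unfold qf; rewrite Rmax1_eq; auto.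
  assert (Hs : continuous (fun y => sqrt (ellq a1 a2 y)) z) by (apply (csqrt (ellq a1 a2)); apply ellq_cont).
  apply cdiv. apply cplus. apply cplus. cont. exact Hs. apply cabs. apply cminus. exact Hs. cont. cont. lra.
Qed.

Lemma Pr_cont a1 a2 z : continuous (Pr a1 a2) z.
Proof.
  unfold Pr. apply (continuous_comp_2 (fun y => fst y / qf a1 a2 y) (fun y => snd y / qf a1 a2 y) (fun u v => (u, v))).
  apply cdiv. apply cfst. apply qf_cont. pose proof (qf_ge1 a1 a2 z); lra.
  apply cdiv. apply csnd. apply qf_cont. pose proof (qf_ge1 a1 a2 z); lra.
  apply (continuous_ext (fun x : R * R => x)). intros [u v]; reflexivity. apply continuous_id.
Qed.


Lemma ext_cont a1 a2 f : 0 < a1 -> 0 < a2 -> cont_on (in_closure a1 a2) f ->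
  forall z, continuous (fun y => f (Pr a1 a2 y)) z.
Proof.
  intros Ha1 Ha2 Hf z. unfold continuous.
  apply filterlim_comp with (G := within (in_closure a1 a2) (locally (Pr a1 a2 z))).
  - intros P HP. unfold within in HP. pose proof (Pr_cont a1 a2 z _ HP) as HQ.
    simpl in HQ. unfold filtermap in *. eapply filter_imp; [|exact HQ]. simpl. intros x Hx. apply Hx, Pr_in; auto.
  - apply Hf, Pr_in; auto.
Qed.

Lemma omega_loc1 a1 a2 z : in_omega a1 a2 z -> locally (fst z) (fun t => in_omega a1 a2 (t, snd z)).
Proof.
  intros Hz. unfold in_omega in *.
  assert (Hc : continuous (fun t => ellq a1 a2 (t, snd z)) (fst z)).
  { unfold ellq, Rdiv; simpl. cont. }
  assert (He : 0 < 1 - ellq a1 a2 z) by lra.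
  specialize (Hc (ball (ellq a1 a2 z) (mkposreal _ He)) (locally_ball _ _)).
  unfold filtermap in Hc. destruct z as [z1 z2]; simpl in *.
  eapply filter_imp; [|exact Hc]. intros x Hx. simpl in Hx. unfold ball in Hx; simpl in Hx.
  unfold AbsRing_ball, abs, minus, plus, opp in Hx; simpl in Hx. apply Rabs_lt_between in Hx. lra.
Qed.

Lemma omega_loc2 a1 a2 z : in_omega a1 a2 z -> locally (snd z) (fun t => in_omega a1 a2 (fst z, t)).
Proof.
  intros Hz. unfold in_omega in *.
  assert (Hc : continuous (fun t => ellq a1 a2 (fst z, t)) (snd z)).
  { unfold ellq, Rdiv; simpl. cont. }
  assert (He : 0 < 1 - ellq a1 a2 z) by lra.
  specialize (Hc (ball (ellq a1 a2 z) (mkposreal _ He)) (locally_ball _ _)).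
  unfold filtermap in Hc. destruct z as [z1 z2]; simpl in *.
  eapply filter_imp; [|exact Hc]. intros x Hx. simpl in Hx. unfold ball in Hx; simpl in Hx.
  unfold AbsRing_ball, abs, minus, plus, opp in Hx; simpl in Hx. apply Rabs_lt_between in Hx. lra.
Qed.

Lemma omega_closure a1 a2 z : in_omega a1 a2 z -> in_closure a1 a2 z.
Proof. unfold in_omega, in_closure; lra. Qed.

Lemma der_Pr1 a1 a2 (f : R * R -> R) z (l : R) : 0 < a1 -> 0 < a2 -> in_omega a1 a2 z ->
  is_derive (fun t => f (t, snd z)) (fst z) l ->
  is_derive (fun t => f (Pr a1 a2 (t, snd z))) (fst z) l.
Proof.
  intros. apply is_derive_ext_loc with (f := fun t => f (t, snd z)); auto.
  eapply filter_imp; [|apply (omega_loc1 a1 a2 z H1)]. intros t Ht.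
  rewrite Pr_id; auto. apply omega_closure; auto.
Qed.

Lemma der_Pr2 a1 a2 (f : R * R -> R) z (l : R) : 0 < a1 -> 0 < a2 -> in_omega a1 a2 z ->
  is_derive (fun t => f (fst z, t)) (snd z) l ->
  is_derive (fun t => f (Pr a1 a2 (fst z, t))) (snd z) l.
Proof.
  intros. apply is_derive_ext_loc with (f := fun t => f (fst z, t)); auto.
  eapply filter_imp; [|apply (omega_loc2 a1 a2 z H1)]. intros t Ht.
  rewrite Pr_id; auto. apply omega_closure; auto.
Qed.

Lemma ballR (x y e : R) : ball x e y <-> Rabs (y - x) < e.
Proof. unfold ball; simpl. unfold AbsRing_ball, abs, minus, plus, opp; simpl. tauto. Qed.

Lemma cont_ball (f : R * R -> R) z eps : continuous f z -> 0 < eps ->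
  exists d : posreal, forall x t, Rabs (x - fst z) < d -> Rabs (t - snd z) < d ->
     Rabs (f (x, t) - f z) < eps.
Proof.
  intros Hc He. specialize (Hc (ball (f z) (mkposreal _ He)) (locally_ball _ _)).
  destruct Hc as [d Hd]. exists d. intros x t H1 H2.
  assert (Hb : ball z d (x, t)). { destruct z; split; simpl in *; apply ballR; auto. }
  specialize (Hd _ Hb). apply ballR in Hd. exact Hd.
Qed.

Lemma UC (f : R * R -> R) x0 a b : (forall z, continuous f z) ->
  forall eps, 0 < eps -> exists d, 0 < d /\ forall x t, Rabs (x - x0) < d -> a <= t <= b ->
     Rabs (f (x, t) - f (x0, t)) < eps.
Proof.
  intros Hc eps He.
  assert (He2 : 0 < eps / 2) by lra.
  assert (Hex : forall t, exists d : posreal, forall x s, Rabs (x - x0) < d -> Rabs (s - t) < d ->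
     Rabs (f (x, s) - f (x0, t)) < eps / 2).
  { intros t. destruct (cont_ball f (x0, t) (eps/2) (Hc _) He2) as [d Hd]. exists d. exact Hd. }
  set (delta := fun t => proj1_sig (constructive_indefinite_description _ (Hex t))).
  assert (Hdel : forall t x s, Rabs (x - x0) < delta t -> Rabs (s - t) < delta t ->
     Rabs (f (x, s) - f (x0, t)) < eps / 2).
  { intros t. unfold delta. destruct (constructive_indefinite_description _ (Hex t)) as [d Hd]. exact Hd. }
  destruct (compactness_value_1d a b delta) as [d Hd].
  exists d. split. apply cond_pos. intros x t Hx Ht.
  apply NNPP. intros Hn. apply (Hd t Ht). intros [u [Hu [Htu Hdu]]]. apply Hn.
  assert (A1 := Hdel u x t ltac:(lra) Htu).
  assert (A2 := Hdel u x0 t ltac:(rewrite Rminus_diag, Rabs_R0; apply cond_pos) Htu).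
  replace (f (x, t) - f (x0, t)) with ((f (x, t) - f (x0, u)) - (f (x0, t) - f (x0, u))) by ring.
  eapply Rle_lt_trans. apply Rabs_triang. rewrite Rabs_Ropp. lra.
Qed.

Definition gc (f : R * R -> R) := forall z, continuous f z.

Lemma cont_eps (g : R -> R) x0 :
  (forall eps, 0 < eps -> exists d, 0 < d /\ forall x, Rabs (x - x0) < d -> Rabs (g x - g x0) < eps) ->
  continuous g x0.
Proof.
  intros H P [e He]. destruct (H e (cond_pos e)) as [d [Hd H']]. exists (mkposreal d Hd).
  intros y Hy. apply He. apply ballR. apply H'. apply ballR in Hy. exact Hy.
Qed.

Lemma eps_cont (g : R -> R) x0 : continuous g x0 ->
  forall eps, 0 < eps -> exists d, 0 < d /\ forall x, Rabs (x - x0) < d -> Rabs (g x - g x0) < eps.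
Proof.
  intros Hc eps He. specialize (Hc (ball (g x0) (mkposreal _ He)) (locally_ball _ _)).
  destruct Hc as [d Hd]. exists d. split. apply cond_pos. intros x Hx.
  specialize (Hd x). apply ballR in Hd. exact Hd. apply ballR; auto.
Qed.

Lemma slice2_cont (f : R * R -> R) x t0 : gc f -> continuous (fun t => f (x, t)) t0.
Proof.
  intros Hf. apply (continuous_comp (fun t => (x, t)) f).
  apply (continuous_comp_2 (fun _ => x) (fun t => t) (fun u v => (u, v))).
  apply continuous_const. apply continuous_id.
  apply (continuous_ext (fun x : R * R => x)). intros [u v]; reflexivity. apply continuous_id.
  apply Hf.
Qed.

Lemma slice1_cont (f : R * R -> R) t s0 : gc f -> continuous (fun s => f (s, t)) s0.
Proof.
  intros Hf. apply (continuous_comp (fun s => (s, t)) f).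
  apply (continuous_comp_2 (fun s => s) (fun _ => t) (fun u v => (u, v))).
  apply continuous_id. apply continuous_const.
  apply (continuous_ext (fun x : R * R => x)). intros [u v]; reflexivity. apply continuous_id.
  apply Hf.
Qed.

Lemma exR (g : R -> R) a b : (forall t, continuous g t) -> ex_RInt g a b.
Proof. intros. apply (ex_RInt_continuous (V := R_CompleteNormedModule)). intros; auto. Qed.

Lemma slice_ex (f : R * R -> R) x a b : gc f -> ex_RInt (fun t => f (x, t)) a b.
Proof. intros. apply exR. intros; apply slice2_cont; auto. Qed.

Lemma RInt_cont_bound (g : R -> R) a s0 : (forall t, continuous g t) ->
  continuous (fun s => RInt g a s) s0.
Proof.
  intros Hg. apply (continuous_RInt_1 g a s0 (fun s => RInt g a s)).
  apply filter_forall. intros z. apply (RInt_correct (V := R_CompleteNormedModule)). apply exR; auto.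
Qed.

Lemma RI_swap (g : R -> R) a b : ex_RInt g a b -> RInt g b a = - RInt g a b.
Proof. intros. rewrite <- (opp_RInt_swap (V := R_CompleteNormedModule)); auto. Qed.
Lemma RI_plus (f g : R -> R) a b : ex_RInt f a b -> ex_RInt g a b ->
  RInt (fun x => f x + g x) a b = RInt f a b + RInt g a b.
Proof. intros. exact (RInt_plus (V := R_CompleteNormedModule) f g a b H H0). Qed.
Lemma RI_minus (f g : R -> R) a b : ex_RInt f a b -> ex_RInt g a b ->
  RInt (fun x => f x - g x) a b = RInt f a b - RInt g a b.
Proof. intros. exact (RInt_minus (V := R_CompleteNormedModule) f g a b H H0). Qed.
Lemma RI_scal (f : R -> R) a b c : ex_RInt f a b ->
  RInt (fun x => c * f x) a b = c * RInt f a b.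
Proof. intros. exact (RInt_scal (V := R_CompleteNormedModule) f a b c H). Qed.
Lemma RI_chasles (f : R -> R) a b c : ex_RInt f a b -> ex_RInt f b c ->
  RInt f a b + RInt f b c = RInt f a c.
Proof. intros. exact (RInt_Chasles (V := R_CompleteNormedModule) f a b c H H0). Qed.
Lemma RI_ext (f g : R -> R) a b : (forall x, Rmin a b < x < Rmax a b -> f x = g x) ->
  RInt f a b = RInt g a b.
Proof. intros. exact (RInt_ext (V := R_CompleteNormedModule) f g a b H). Qed.

Lemma abs_RInt_bound (g : R -> R) a b M : (forall t, continuous g t) ->
  (forall t, Rmin a b <= t <= Rmax a b -> Rabs (g t) <= M) ->
  Rabs (RInt g a b) <= Rabs (b - a) * M.
Proof.
  intros Hg HM. destruct (Rle_dec a b).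
  - rewrite (Rabs_right (b - a)) by lra. apply abs_RInt_le_const; auto. apply exR; auto.
    intros; apply HM. rewrite Rmin_left, Rmax_right; lra.
  - rewrite RI_swap, Rabs_Ropp by (apply exR; auto). rewrite (Rabs_left (b - a)) by lra.
    replace (- (b - a)) with (a - b) by ring. apply abs_RInt_le_const; auto. lra. apply exR; auto.
    intros; apply HM. rewrite Rmin_right, Rmax_left; lra.
Qed.

Lemma RInt0_cont (f : R * R -> R) (w : R -> R) x0 : gc f -> continuous w x0 ->
  continuous (fun x => RInt (fun t => f (x, t)) 0 (w x)) x0.
Proof.
  intros Hf Hw. apply cont_eps. intros eps He.
  set (W0 := w x0). set (A := Rabs W0 + 1).
  assert (HA : 0 < A) by (unfold A; pose proof (Rabs_pos W0); lra).
  set (G := fun s => RInt (fun t => f (x0, t)) 0 s).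
  assert (HG : continuous (fun x => G (w x)) x0).
  { apply (continuous_comp w G); auto. apply RInt_cont_bound. intros; apply slice2_cont; auto. }
  destruct (eps_cont _ _ HG (eps/2) ltac:(lra)) as [d1 [Hd1 H1]].
  destruct (eps_cont _ _ Hw 1 ltac:(lra)) as [d2 [Hd2 H2]].
  assert (He' : 0 < eps / (2 * (A + 1))) by (apply Rdiv_lt_0_compat; lra).
  destruct (UC f x0 (-A) A Hf _ He') as [d3 [Hd3 H3]].
  exists (Rmin d1 (Rmin d2 d3)). split. apply Rmin_pos; auto. apply Rmin_pos; auto.
  intros x Hx.
  assert (Hx1 : Rabs (x - x0) < d1) by (eapply Rlt_le_trans; [exact Hx| apply Rmin_l]).
  assert (Hx2 : Rabs (x - x0) < d2) by (eapply Rlt_le_trans; [exact Hx| eapply Rle_trans; [apply Rmin_r| apply Rmin_l]]).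
  assert (Hx3 : Rabs (x - x0) < d3) by (eapply Rlt_le_trans; [exact Hx| eapply Rle_trans; [apply Rmin_r| apply Rmin_r]]).
  specialize (H1 x Hx1). specialize (H2 x Hx2). fold W0 in H1, H2.
  assert (HwA : Rabs (w x) < A).
  { unfold A. pose proof (Rabs_triang_inv (w x) W0). lra. }
  assert (Hsplit : RInt (fun t => f (x, t)) 0 (w x) - RInt (fun t => f (x0, t)) 0 W0 =
     RInt (fun t => f (x, t) - f (x0, t)) 0 (w x) + (G (w x) - G W0)).
  { unfold G. rewrite RI_minus by (apply slice_ex; auto). ring. }
  cbv beta. fold W0. change (Rabs (RInt (fun t => f (x,t)) 0 (w x) - RInt (fun t => f (x0,t)) 0 W0) < eps). rewrite Hsplit.
  assert (Hb : Rabs (RInt (fun t => f (x, t) - f (x0, t)) 0 (w x)) <= Rabs (w x - 0) * (eps / (2 * (A + 1)))).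
  { apply abs_RInt_bound. intros; apply cminus; apply slice2_cont; auto.
    intros t Ht. left. apply H3; auto.
    assert (Rmin 0 (w x) <= t <= Rmax 0 (w x)) by auto.
    destruct (Rle_dec 0 (w x)).
    - rewrite Rmin_left, Rmax_right in Ht by auto. rewrite Rabs_right in HwA by lra. lra.
    - rewrite Rmin_right, Rmax_left in Ht by lra. rewrite Rabs_left in HwA by lra. lra. }
  rewrite Rminus_0_r in Hb.
  assert (Rabs (w x) * (eps / (2 * (A + 1))) <= A * (eps / (2 * (A + 1)))).
  { apply Rmult_le_compat_r; lra. }
  assert (A * (eps / (2 * (A + 1))) < eps / 2).
  { unfold Rdiv. rewrite Rinv_mult. 
    replace (A * (eps * (/ 2 * / (A + 1)))) with ((eps / 2) * (A / (A + 1))) by (field; lra).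
    assert (A / (A + 1) < 1). { apply (Rmult_lt_reg_r (A + 1)). lra. unfold Rdiv. rewrite Rmult_assoc, Rinv_l by lra. lra. }
    assert (0 < eps / 2) by lra. nra. }
  eapply Rle_lt_trans. apply Rabs_triang. lra.
Qed.

Lemma RIntb_cont (f : R * R -> R) (u v : R -> R) x0 : gc f -> continuous u x0 -> continuous v x0 ->
  continuous (fun x => RInt (fun t => f (x, t)) (u x) (v x)) x0.
Proof.
  intros Hf Hu Hv.
  apply continuous_ext with (f := fun x => RInt (fun t => f (x, t)) 0 (v x) - RInt (fun t => f (x, t)) 0 (u x)).
  - intros x. rewrite <- (RI_chasles _ (u x) 0 (v x)) by (apply slice_ex; auto).
    rewrite (RI_swap _ (u x) 0) by (apply slice_ex; auto). match goal with |- ?A - - ?B = ?B2 + ?A2 => change (A - - B = B + A) end; ring.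
  - apply cminus; apply RInt0_cont; auto.
Qed.

Ltac contS1 := match goal with
  | |- continuous (fun t => ?f (?x, t)) _ => apply slice2_cont; auto
  | |- continuous (fun t => ?f (t, ?x)) _ => apply slice1_cont; auto
  | _ => cont1
  end.
Ltac contS := repeat contS1.

Lemma ftc (F g : R -> R) a b : a <= b -> (forall t, continuous F t) -> (forall t, continuous g t) ->
  (forall t, a < t < b -> is_derive F t (g t)) -> RInt g a b = F b - F a.
Proof.
  intros Hab HF Hg Hd.
  set (h := fun x => RInt g a x - F x).
  assert (Hder : forall x, a < x < b -> is_derive h x 0).
  { intros x Hx. replace 0 with (g x - g x) by ring. unfold h.
    apply (is_derive_minus (fun x => RInt g a x) F). 
    apply (is_derive_RInt g (fun x => RInt g a x) a x).
    apply filter_forall. intros z. apply (RInt_correct (V := R_CompleteNormedModule)). apply exR; auto.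
    auto. apply Hd; auto. }
  destruct (MVT_gen h a b (fun _ => 0)) as [c [Hc Heq]].
  - rewrite Rmin_left, Rmax_right by auto. auto.
  - intros x _. apply continuity_pt_filterlim. unfold h. apply cminus. apply RInt_cont_bound; auto. auto.
  - unfold h in Heq. rewrite RInt_point in Heq. simpl in Heq. unfold zero in Heq; simpl in Heq. lra.
Qed.

Lemma eb_cont a1 a2 x : continuous (ell_bound a1 a2) x.
Proof. unfold ell_bound, Rdiv. cont. Qed.

Lemma u_nonneg a1 x : 0 < a1 -> -a1 <= x <= a1 -> 0 <= 1 - x ^ 2 / a1 ^ 2.
Proof.
  intros. replace (1 - x ^ 2 / a1 ^ 2) with ((a1 ^ 2 - x ^ 2) / a1 ^ 2) by (field; lra).
  apply Rdiv_le_0_compat. nra. apply pow_lt; auto.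
Qed.

Lemma u_pos a1 x : 0 < a1 -> -a1 < x < a1 -> 0 < 1 - x ^ 2 / a1 ^ 2.
Proof.
  intros. replace (1 - x ^ 2 / a1 ^ 2) with ((a1 ^ 2 - x ^ 2) / a1 ^ 2) by (field; lra).
  apply Rdiv_lt_0_compat. nra. apply pow_lt; auto.
Qed.

Lemma u_nonpos a1 x : 0 < a1 -> ~ (-a1 < x < a1) -> 1 - x ^ 2 / a1 ^ 2 <= 0.
Proof.
  intros. replace (1 - x ^ 2 / a1 ^ 2) with ((a1 ^ 2 - x ^ 2) / a1 ^ 2) by (field; lra).
  assert (a1 ^ 2 - x ^ 2 <= 0). { destruct (Rle_dec x (-a1)); [nra|]. assert (a1 <= x) by lra. nra. }
  unfold Rdiv. assert (0 < / a1 ^ 2) by (apply Rinv_0_lt_compat, pow_lt; auto). nra.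
Qed.

Lemma eb_sq a1 a2 x : 0 < a1 -> 0 < a2 -> -a1 <= x <= a1 ->
  (ell_bound a1 a2 x) ^ 2 = a2 ^ 2 * (1 - x ^ 2 / a1 ^ 2).
Proof.
  intros. unfold ell_bound. rewrite Rpow_mult_distr. rewrite <- Rsqr_pow2 with (x := sqrt _).
  rewrite Rsqr_sqrt; auto. apply u_nonneg; auto.
Qed.

Lemma eb_nonneg a1 a2 x : 0 < a2 -> 0 <= ell_bound a1 a2 x.
Proof. intros. unfold ell_bound. apply Rmult_le_pos. lra. apply sqrt_pos. Qed.

Lemma eb_pos a1 a2 x : 0 < a1 -> 0 < a2 -> -a1 < x < a1 -> 0 < ell_bound a1 a2 x.
Proof. intros. unfold ell_bound. apply Rmult_lt_0_compat. lra. apply sqrt_lt_R0, u_pos; auto. Qed.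

Lemma eb_zero a1 a2 x : 0 < a1 -> ~ (-a1 < x < a1) -> ell_bound a1 a2 x = 0.
Proof. intros. unfold ell_bound. rewrite sqrt_neg_0. ring. apply u_nonpos; auto. Qed.

Lemma eb_Gamma a1 a2 x t : 0 < a1 -> 0 < a2 -> -a1 <= x <= a1 -> t ^ 2 = (ell_bound a1 a2 x) ^ 2 ->
  in_Gamma a1 a2 (x, t).
Proof.
  intros. unfold in_Gamma, ellq; cbn [fst snd]. rewrite H2, eb_sq by auto. field. lra.
Qed.

Lemma eb_omega a1 a2 x t : 0 < a1 -> 0 < a2 -> - ell_bound a1 a2 x < t < ell_bound a1 a2 x ->
  in_omega a1 a2 (x, t).
Proof.
  intros. destruct (Rlt_dec (-a1) x); [destruct (Rlt_dec x a1)|].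
  - unfold in_omega, ellq; cbn [fst snd]. pose proof (eb_sq a1 a2 x H H0 ltac:(lra)).
    pose proof (eb_nonneg a1 a2 x H0).
    assert (t ^ 2 < ell_bound a1 a2 x ^ 2) by nra. rewrite H2 in H4.
    assert (t ^ 2 / a2 ^ 2 < 1 - x ^ 2 / a1 ^ 2).
    { apply (Rmult_lt_reg_r (a2 ^ 2)). apply pow_lt; auto. unfold Rdiv. rewrite Rmult_assoc, Rinv_l. lra.
      apply pow_nonzero; lra. }
    lra.
  - rewrite eb_zero in H1; auto. lra. lra.
  - rewrite eb_zero in H1; auto. lra. lra.
Qed.

Lemma eb_closure a1 a2 x t : 0 < a1 -> 0 < a2 -> - ell_bound a1 a2 x <= t <= ell_bound a1 a2 x ->
  -a1 <= x <= a1 -> in_closure a1 a2 (x, t).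
Proof.
  intros. unfold in_closure, ellq; cbn [fst snd]. pose proof (eb_sq a1 a2 x H H0 H2).
    pose proof (eb_nonneg a1 a2 x H0).
    assert (t ^ 2 <= ell_bound a1 a2 x ^ 2) by nra. rewrite H3 in H5.
    assert (t ^ 2 / a2 ^ 2 <= 1 - x ^ 2 / a1 ^ 2).
    { apply (Rmult_le_reg_r (a2 ^ 2)). apply pow_lt; auto. unfold Rdiv. rewrite Rmult_assoc, Rinv_l. lra.
      apply pow_nonzero; lra. }
    lra.
Qed.

Lemma eb_deriv a1 a2 x : 0 < a1 -> -a1 < x < a1 -> ex_derive (ell_bound a1 a2) x.
Proof.
  intros. unfold ell_bound. auto_derive. apply u_pos; auto.
Qed.

Lemma eb_concave a1 a2 y1 x s : 0 < a1 -> 0 < a2 -> Rmin y1 x <= s <= Rmax y1 x ->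
  Rmin (ell_bound a1 a2 y1) (ell_bound a1 a2 x) <= ell_bound a1 a2 s.
Proof.
  intros. assert (Hs : s ^ 2 <= Rmax (y1 ^ 2) (x ^ 2)).
  { assert (s ^ 2 <= y1 ^ 2 \/ s ^ 2 <= x ^ 2).
    { unfold Rmin, Rmax in *. destruct (Rle_dec y1 x); destruct (Rle_dec 0 s).
      right; nra. left; nra. left; nra. right; nra. }
    unfold Rmax. destruct (Rle_dec (y1^2) (x^2)); lra. }
  assert (forall u v, u ^ 2 <= v ^ 2 -> ell_bound a1 a2 v <= ell_bound a1 a2 u).
  { intros u v Huv. unfold ell_bound. apply Rmult_le_compat_l. lra. apply sqrt_le_1_alt.
    unfold Rdiv. assert (0 < / a1 ^ 2) by (apply Rinv_0_lt_compat, pow_lt; auto). nra. }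
  unfold Rmax in Hs. destruct (Rle_dec (y1 ^ 2) (x ^ 2)).
  - eapply Rle_trans. apply Rmin_r. apply H2; auto.
  - eapply Rle_trans. apply Rmin_l. apply H2; auto.
Qed.

Lemma OI_cont a1 a2 f x : gc f ->
  continuous (fun x => RInt (fun y2 => f (x, y2)) (- ell_bound a1 a2 x) (ell_bound a1 a2 x)) x.
Proof.
  intros. apply (RIntb_cont f (fun x => - ell_bound a1 a2 x) (ell_bound a1 a2)); auto.
  apply copp, eb_cont. apply eb_cont.
Qed.

Lemma OI_ex a1 a2 f a b : gc f ->
  ex_RInt (fun x => RInt (fun y2 => f (x, y2)) (- ell_bound a1 a2 x) (ell_bound a1 a2 x)) a b.
Proof. intros. apply exR. intros; apply OI_cont; auto. Qed.

Lemma io_ext a1 a2 f g : 0 < a1 -> 0 < a2 -> (forall z, in_omega a1 a2 z -> f z = g z) ->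
  int_omega a1 a2 f = int_omega a1 a2 g.
Proof.
  intros. unfold int_omega. apply RI_ext. intros x Hx. apply RI_ext. intros t Ht.
  pose proof (eb_nonneg a1 a2 x H0).
  rewrite Rmin_left, Rmax_right in Ht by lra. apply H1, eb_omega; auto.
Qed.

Lemma io_plus a1 a2 f g : gc f -> gc g ->
  int_omega a1 a2 (fun z => f z + g z) = int_omega a1 a2 f + int_omega a1 a2 g.
Proof.
  intros. unfold int_omega. rewrite <- RI_plus by (apply OI_ex; auto).
  apply RI_ext. intros x _. apply RI_plus; apply slice_ex; auto.
Qed.

Lemma io_scal a1 a2 f c : gc f ->
  int_omega a1 a2 (fun z => c * f z) = c * int_omega a1 a2 f.
Proof.
  intros. unfold int_omega. rewrite <- RI_scal by (apply OI_ex; auto).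
  apply RI_ext. intros x _. apply RI_scal; apply slice_ex; auto.
Qed.

Lemma RInt_zero' (g : R -> R) a b : (forall x, Rmin a b < x < Rmax a b -> g x = 0) -> RInt g a b = 0.
Proof.
  intros. rewrite (RI_ext g (fun _ => 0)) by auto. rewrite RInt_const. unfold scal; simpl.
  unfold mult; simpl. ring.
Qed.

Lemma L2 a1 a2 (F G : R * R -> R) : 0 < a1 -> 0 < a2 -> gc F -> gc G ->
  (forall z, in_Gamma a1 a2 z -> F z = 0) ->
  (forall z, in_omega a1 a2 z -> is_derive (fun t => F (fst z, t)) (snd z) (G z)) ->
  int_omega a1 a2 G = 0.
Proof.
  intros Ha1 Ha2 HF HG H0 Hd. unfold int_omega. apply RInt_zero'. intros x Hx.
  rewrite Rmin_left, Rmax_right in Hx by lra.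
  pose proof (eb_pos a1 a2 x Ha1 Ha2 Hx).
  rewrite (ftc (fun t => F (x, t))). 
  - rewrite !H0. ring. apply eb_Gamma; auto. lra. ring. apply eb_Gamma; auto. lra.
  - lra.
  - intros; apply slice2_cont; auto.
  - intros; apply slice2_cont; auto.
  - intros t Ht. apply (Hd (x, t)). apply eb_omega; auto.
Qed.

Lemma lip_of_derive (phi : R -> R) y1 : ex_derive phi y1 ->
  exists L r, 0 <= L /\ 0 < r /\ forall x, Rabs (x - y1) < r -> Rabs (phi x - phi y1) <= L * Rabs (x - y1).
Proof.
  intros [d Hd]. apply is_derive_Reals in Hd. destruct (Hd 1 Rlt_0_1) as [del Hdel].
  exists (Rabs d + 1), del. split. pose proof (Rabs_pos d); lra. split. apply cond_pos.
  intros x Hx. destruct (Req_dec x y1).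
  - subst. rewrite !Rminus_diag, Rabs_R0. lra.
  - assert (Hh : x - y1 <> 0) by lra. specialize (Hdel (x - y1) Hh Hx).
    replace (y1 + (x - y1)) with x in Hdel by ring.
    set (q := (phi x - phi y1) / (x - y1)) in Hdel.
    assert (phi x - phi y1 = q * (x - y1)) by (unfold q; field; auto).
    rewrite H0, Rabs_mult. apply Rmult_le_compat_r. apply Rabs_pos.
    pose proof (Rabs_triang_inv q d). lra.
Qed.

Lemma bound_open (g : R -> R) a b M : a <= b -> (forall t, continuous g t) ->
  (forall t, a < t < b -> Rabs (g t) <= M) -> Rabs (RInt g a b) <= (b - a) * M.
Proof.
  intros Hab Hg HM. apply Rabs_le.
  assert (E : ex_RInt g a b) by (apply exR; auto).
  assert (Ec : forall c, ex_RInt (fun _ => c) a b) by (intros; apply exR; intros; apply continuous_const).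
  assert (Rc : forall c, RInt (fun _ => c) a b = (b - a) * c).
  { intros. rewrite RInt_const. reflexivity. }
  split.
  - replace (- ((b - a) * M)) with ((b - a) * (- M)) by ring. rewrite <- (Rc (- M)).
    apply RInt_le; auto. intros. pose proof (HM x H). apply Rabs_le_between in H0. lra.
  - rewrite <- (Rc M). apply RInt_le; auto. intros. pose proof (HM x H). apply Rabs_le_between in H0. lra.
Qed.

Lemma leib_half (F G : R * R -> R) (phi : R -> R) y1 :
  gc F -> gc G -> 0 < phi y1 -> ex_derive phi y1 -> F (y1, phi y1) = 0 ->
  (forall s t, 0 <= t < phi s -> is_derive (fun u => F (u, t)) s (G (s, t))) ->
  (forall x s, Rmin y1 x <= s <= Rmax y1 x -> Rmin (phi y1) (phi x) <= phi s) ->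
  is_derive (fun x => RInt (fun t => F (x, t)) 0 (phi x)) y1 (RInt (fun t => G (y1, t)) 0 (phi y1)).
Proof.
  intros HF HG Hb Hdphi HF0 Hder Hconc.
  apply is_derive_Reals. intros eps He.
  set (beta := phi y1) in *.
  destruct (lip_of_derive phi y1 Hdphi) as [L [r [HL [Hr Hlip]]]].
  set (e1 := eps / (4 * (beta + 1))).
  assert (He1 : 0 < e1) by (unfold e1; apply Rdiv_lt_0_compat; lra).
  destruct (UC G y1 0 beta HG e1 He1) as [d3 [Hd3 HUC]].
  set (e2 := eps / (4 * (L + 1))).
  assert (He2 : 0 < e2) by (unfold e2; apply Rdiv_lt_0_compat; lra).
  destruct (cont_ball F (y1, beta) e2 (HF _) He2) as [d4 Hd4].
  destruct (cont_ball G (y1, beta) 1 (HG _) Rlt_0_1) as [d5 Hd5].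
  set (M := Rabs (G (y1, beta)) + 1).
  assert (HM : 0 <= M) by (unfold M; pose proof (Rabs_pos (G (y1, beta))); lra).
  assert (HL1 : 0 < L + 1) by lra.
  set (del := Rmin r (Rmin d3 (Rmin (d4 / (L + 1)) (Rmin (d5 / (L + 1))
          (Rmin (beta / (2 * (L + 1))) (eps / (4 * (L * M + 1)))))))).
  assert (Hdel : 0 < del).
  { unfold del. repeat apply Rmin_pos; auto; try apply Rdiv_lt_0_compat; try apply cond_pos; try lra.
    assert (0 <= L * M) by (apply Rmult_le_pos; auto). lra. }
  exists (mkposreal del Hdel). intros h Hh0 Hh. simpl in Hh.
  assert (Hhr : Rabs h < r) by (eapply Rlt_le_trans; [exact Hh|apply Rmin_l]).
  assert (Hh3 : Rabs h < d3) by (eapply Rlt_le_trans; [exact Hh|unfold del; eapply Rle_trans; [apply Rmin_r|apply Rmin_l]]).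
  assert (Hh4 : Rabs h < d4 / (L + 1)) by (eapply Rlt_le_trans; [exact Hh|unfold del; do 2 (eapply Rle_trans; [apply Rmin_r|]); apply Rmin_l]).
  assert (Hh5 : Rabs h < d5 / (L + 1)) by (eapply Rlt_le_trans; [exact Hh|unfold del; do 3 (eapply Rle_trans; [apply Rmin_r|]); apply Rmin_l]).
  assert (Hh6 : Rabs h < beta / (2 * (L + 1))) by (eapply Rlt_le_trans; [exact Hh|unfold del; do 4 (eapply Rle_trans; [apply Rmin_r|]); apply Rmin_l]).
  assert (Hh7 : Rabs h < eps / (4 * (L * M + 1))) by (eapply Rlt_le_trans; [exact Hh|unfold del; do 4 (eapply Rle_trans; [apply Rmin_r|]); apply Rmin_r]).
  clear Hh.
  set (x := y1 + h). set (px := phi x). set (ah := Rabs h).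
  assert (Hah : 0 < ah) by (unfold ah; apply Rabs_pos_lt; auto).
  change (ah < r) in Hhr. change (ah < d3) in Hh3. change (ah < d4 / (L + 1)) in Hh4.
  change (ah < d5 / (L + 1)) in Hh5. change (ah < beta / (2 * (L + 1))) in Hh6.
  change (ah < eps / (4 * (L * M + 1))) in Hh7.
  assert (Hxy : x - y1 = h) by (unfold x; ring).
  assert (Hlipx : Rabs (px - beta) <= L * ah).
  { unfold px, beta, ah. rewrite <- Hxy. apply Hlip. rewrite Hxy; auto. }
  assert (HLah : forall c, 0 < c -> ah < c / (L + 1) -> L * ah < c).
  { intros c Hc Hlt. apply (Rmult_lt_compat_l (L + 1)) in Hlt; auto.
    replace ((L + 1) * (c / (L + 1))) with c in Hlt by (field; lra). nra. }
  assert (Hpx : beta / 2 < px).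
  { assert (L * ah < beta / 2). { apply HLah. lra. replace (beta / 2 / (L + 1)) with (beta / (2 * (L + 1))) by (field; lra). auto. }
    apply Rabs_le_between in Hlipx. lra. }
  set (m := Rmin px beta).
  assert (Hm0 : 0 < m) by (unfold m; apply Rmin_pos; lra).
  assert (Hmpx : m <= px) by apply Rmin_l.
  assert (Hmb : m <= beta) by apply Rmin_r.
  assert (Hmd : Rabs (px - m) <= L * ah /\ Rabs (beta - m) <= L * ah).
  { unfold m, Rmin. destruct (Rle_dec px beta).
    - rewrite Rminus_diag, Rabs_R0. rewrite <- Rabs_Ropp. replace (- (beta - px)) with (px - beta) by ring. split; auto.
      apply Rmult_le_pos; auto. unfold ah; apply Rabs_pos.
    - rewrite Rminus_diag, Rabs_R0. split; auto. apply Rmult_le_pos; auto. unfold ah; apply Rabs_pos. }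
  destruct Hmd as [Hmd1 Hmd2].
  assert (Hd4' : L * ah < d4) by (apply HLah; auto; apply cond_pos).
  assert (Hd5' : L * ah < d5) by (apply HLah; auto; apply cond_pos).
  assert (Hah4 : ah < d4). { apply (Rlt_le_trans _ (d4 / (L + 1))); auto.
     apply Rmult_le_reg_r with (L + 1); auto. unfold Rdiv. rewrite Rmult_assoc, Rinv_l by lra.
     pose proof (cond_pos d4). nra. }
  assert (BA : Rabs (RInt (fun t => F (x, t) - F (y1, t) - h * G (y1, t)) 0 m) <= (m - 0) * (ah * e1)).
  { apply bound_open. lra. intros; contS. intros t Ht.
    destruct (MVT_gen (fun u => F (u, t)) y1 x (fun s => G (s, t))) as [c [Hc Hmvt]].
    - intros s Hs. apply Hder. split. lra.
      assert (Rmin beta px <= phi s) by (apply Hconc; lra).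
      unfold m in Ht. rewrite Rmin_comm in Ht. lra.
    - intros s _. apply continuity_pt_filterlim. apply slice1_cont; auto.
    - cbv beta in Hmvt. rewrite Hxy in Hmvt.
      replace (F (x, t) - F (y1, t) - h * G (y1, t)) with (h * (G (c, t) - G (y1, t))) by lra.
      rewrite Rabs_mult. fold ah. apply Rmult_le_compat_l. lra. left. apply HUC.
      assert (Rabs (c - y1) <= Rabs (x - y1)).
      { unfold Rmin, Rmax in Hc. destruct (Rle_dec y1 x).
        rewrite !Rabs_right by lra. lra. rewrite !Rabs_left1 by lra. lra. }
      rewrite Hxy in H. fold ah in H. lra.
      split; lra. }
  assert (Hmt : forall t, m <= t <= Rmax m px -> Rabs (t - beta) <= L * ah).
  { intros t Ht. rewrite Rmax_right in Ht by auto. unfold m, Rmin in Ht. destruct (Rle_dec px beta).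
    - assert (t = px) by lra. subst t. rewrite <- Hlipx. lra.
    - eapply Rle_trans; [|exact Hlipx]. rewrite !Rabs_right by lra. lra. }
  assert (BB1 : Rabs (RInt (fun t => F (x, t)) m px) <= Rabs (px - m) * e2).
  { apply abs_RInt_bound. intros; contS. intros t Ht. rewrite Rmin_left in Ht by auto.
    pose proof (Hmt t Ht). left. rewrite <- (Rminus_0_r (F (x, t))). rewrite <- HF0.
    apply Hd4; simpl. rewrite Hxy; fold ah; auto. lra. }
  assert (BB2 : Rabs (RInt (fun t => F (y1, t)) m beta) <= Rabs (beta - m) * e2).
  { apply abs_RInt_bound. intros; contS. intros t Ht. rewrite Rmin_left, Rmax_right in Ht by auto.
    assert (Rabs (t - beta) <= L * ah). { rewrite Rabs_left1 by lra. rewrite Rabs_right in Hmd2 by lra. lra. }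
    left. rewrite <- (Rminus_0_r (F (y1, t))). rewrite <- HF0.
    apply Hd4; simpl. rewrite Rminus_diag, Rabs_R0; apply cond_pos. lra. }
  assert (BB3 : Rabs (RInt (fun t => G (y1, t)) m beta) <= Rabs (beta - m) * M).
  { apply abs_RInt_bound. intros; contS. intros t Ht. rewrite Rmin_left, Rmax_right in Ht by auto.
    assert (Rabs (t - beta) <= L * ah). { rewrite Rabs_left1 by lra. rewrite Rabs_right in Hmd2 by lra. lra. }
    assert (Rabs (G (y1, t) - G (y1, beta)) < 1).
    { apply Hd5; simpl. rewrite Rminus_diag, Rabs_R0; apply cond_pos. lra. }
    unfold M. pose proof (Rabs_triang_inv (G (y1, t)) (G (y1, beta))). lra. }
  assert (E1 : RInt (fun t => F (x, t)) 0 px = RInt (fun t => F (x, t)) 0 m + RInt (fun t => F (x, t)) m px)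
    by (symmetry; apply RI_chasles; apply slice_ex; auto).
  assert (E2 : RInt (fun t => F (y1, t)) 0 beta = RInt (fun t => F (y1, t)) 0 m + RInt (fun t => F (y1, t)) m beta)
    by (symmetry; apply RI_chasles; apply slice_ex; auto).
  assert (E3 : RInt (fun t => G (y1, t)) 0 beta = RInt (fun t => G (y1, t)) 0 m + RInt (fun t => G (y1, t)) m beta)
    by (symmetry; apply RI_chasles; apply slice_ex; auto).
  assert (EA : RInt (fun t => F (x, t) - F (y1, t) - h * G (y1, t)) 0 m =
     RInt (fun t => F (x, t)) 0 m - RInt (fun t => F (y1, t)) 0 m - h * RInt (fun t => G (y1, t)) 0 m).
  { rewrite (RI_minus (fun t => F (x, t) - F (y1, t)) (fun t => h * G (y1, t))).
    rewrite (RI_minus (fun t => F (x, t)) (fun t => F (y1, t))).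
    rewrite (RI_scal (fun t => G (y1, t))). match goal with |- ?a = ?b => change (@eq R a b) end. ring.
    all: apply exR; intros; contS. }
  change (Rabs ((RInt (fun t => F (x, t)) 0 px - RInt (fun t => F (y1, t)) 0 beta) / h
     - RInt (fun t => G (y1, t)) 0 beta) < eps).
  rewrite E1, E2, E3.
  set (A := RInt (fun t => F (x, t) - F (y1, t) - h * G (y1, t)) 0 m) in *.
  set (B1 := RInt (fun t => F (x, t)) m px) in *.
  set (B2 := RInt (fun t => F (y1, t)) m beta) in *.
  set (B3 := RInt (fun t => G (y1, t)) m beta) in *.
  set (C1 := RInt (fun t => F (x, t)) 0 m) in *.
  set (C2 := RInt (fun t => F (y1, t)) 0 m) in *.
  set (C3 := RInt (fun t => G (y1, t)) 0 m) in *.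
  replace ((C1 + B1 - (C2 + B2)) / h - (C3 + B3)) with ((A + B1 - B2 - h * B3) / h)
    by (rewrite EA; field; auto).
  unfold Rdiv. rewrite Rabs_mult, Rabs_Rinv by auto. fold ah.
  apply (Rmult_lt_reg_r ah); auto. rewrite Rmult_assoc, Rinv_l by lra. rewrite Rmult_1_r.
  assert (P1 : beta * e1 < eps / 4).
  { unfold e1. replace (beta * (eps / (4 * (beta + 1)))) with ((eps / 4) * (beta / (beta + 1))) by (field; lra).
    assert (beta / (beta + 1) < 1). { apply (Rmult_lt_reg_r (beta + 1)). lra. unfold Rdiv. rewrite Rmult_assoc, Rinv_l by lra. lra. }
    nra. }
  assert (P2 : L * e2 < eps / 4).
  { unfold e2. replace (L * (eps / (4 * (L + 1)))) with ((eps / 4) * (L / (L + 1))) by (field; lra).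
    assert (L / (L + 1) < 1). { apply (Rmult_lt_reg_r (L + 1)). lra. unfold Rdiv. rewrite Rmult_assoc, Rinv_l by lra. lra. }
    nra. }
  assert (P3 : L * M * ah < eps / 4).
  { assert (HLM : 0 <= L * M) by (apply Rmult_le_pos; auto).
    apply (Rmult_lt_compat_l (L * M + 1)) in Hh7; [|lra].
    replace ((L * M + 1) * (eps / (4 * (L * M + 1)))) with (eps / 4) in Hh7 by (field; lra). nra. }
  assert (S1 : Rabs A <= ah * (beta * e1)).
  { eapply Rle_trans. exact BA. rewrite Rminus_0_r.
    replace (ah * (beta * e1)) with (beta * (ah * e1)) by ring. apply Rmult_le_compat_r; auto.
    apply Rmult_le_pos; lra. }
  assert (S2 : Rabs B1 <= ah * (L * e2)).
  { eapply Rle_trans. exact BB1. replace (ah * (L * e2)) with ((L * ah) * e2) by ring.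
    apply Rmult_le_compat_r; auto. lra. }
  assert (S3 : Rabs B2 <= ah * (L * e2)).
  { eapply Rle_trans. exact BB2. replace (ah * (L * e2)) with ((L * ah) * e2) by ring.
    apply Rmult_le_compat_r; auto. lra. }
  assert (S4 : Rabs (h * B3) <= ah * (L * M * ah)).
  { rewrite Rabs_mult. fold ah. apply Rmult_le_compat_l. lra.
    eapply Rle_trans. exact BB3. replace (L * M * ah) with ((L * ah) * M) by ring.
    apply Rmult_le_compat_r; auto. }
  assert (T1 : ah * (beta * e1) < ah * (eps / 4)) by (apply Rmult_lt_compat_l; auto).
  assert (T2 : ah * (L * e2) < ah * (eps / 4)) by (apply Rmult_lt_compat_l; auto).
  assert (T3 : ah * (L * M * ah) < ah * (eps / 4)) by (apply Rmult_lt_compat_l; auto).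
  assert (Rabs (A + B1 - B2 - h * B3) <= Rabs A + Rabs B1 + Rabs B2 + Rabs (h * B3)).
  { unfold Rminus. eapply Rle_trans. apply Rabs_triang. rewrite Rabs_Ropp.
    eapply Rle_trans. apply Rplus_le_compat_r. apply Rabs_triang. rewrite Rabs_Ropp.
    eapply Rle_trans. apply Rplus_le_compat_r. apply Rplus_le_compat_r. apply Rabs_triang. lra. }
  lra.
Qed.

Ltac Rring := match goal with |- ?a = ?b => change (@eq R a b) end; ring.

Lemma RI_refl (f : R -> R) c : (forall t, continuous f t) ->
  RInt f (- c) 0 = RInt (fun t => f (- t)) 0 c.
Proof.
  intros Hf. pose proof (RInt_comp_lin (V := R_CompleteNormedModule) f (-1) 0 c 0) as H.
  replace (-1 * c + 0) with (- c) in H by ring. replace (-1 * 0 + 0) with 0 in H by ring.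
  rewrite <- H by (apply exR; auto). clear H.
  assert (Ec : ex_RInt (fun t => f (- t)) c 0).
  { apply exR. intros. apply (continuous_comp (fun t => - t) f). apply copp, cid. auto. }
  rewrite (RI_swap (fun t => f (- t)) c 0) by auto.
  rewrite (RI_ext _ (fun y => -1 * f (- y))).
  rewrite RI_scal by auto. Rring.
  intros. unfold scal; simpl. unfold mult; simpl. f_equal. f_equal. ring.
Qed.

Lemma gc_refl (F : R * R -> R) : gc F -> gc (fun z => F (fst z, - snd z)).
Proof.
  intros HF z. apply (continuous_comp (fun z : R * R => (fst z, - snd z)) F); auto.
  apply (continuous_comp_2 (fun z : R * R => fst z) (fun z : R * R => - snd z) (fun u v => (u, v))).
  apply cfst. apply copp, csnd.
  apply (continuous_ext (fun x : R * R => x)). intros [u v]; reflexivity. apply continuous_id.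
Qed.

Lemma RI_split_refl (f : R -> R) c : (forall t, continuous f t) ->
  RInt f (- c) c = RInt f 0 c + RInt (fun t => f (- t)) 0 c.
Proof.
  intros. rewrite <- RI_refl by auto. rewrite <- (RI_chasles f (- c) 0 c) by (apply exR; auto). Rring.
Qed.

Lemma L1 a1 a2 (F G : R * R -> R) : 0 < a1 -> 0 < a2 -> gc F -> gc G ->
  (forall z, in_Gamma a1 a2 z -> F z = 0) ->
  (forall z, in_omega a1 a2 z -> is_derive (fun t => F (t, snd z)) (fst z) (G z)) ->
  int_omega a1 a2 G = 0.
Proof.
  intros Ha1 Ha2 HF HG H0 Hd. unfold int_omega.
  rewrite (ftc (fun x => RInt (fun t => F (x, t)) (- ell_bound a1 a2 x) (ell_bound a1 a2 x))).
  - rewrite !eb_zero; auto; try lra. rewrite Ropp_0, !RInt_point. simpl. unfold zero; simpl. ring.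
  - lra.
  - intros; apply OI_cont; auto.
  - intros; apply OI_cont; auto.
  - intros x Hx.
    assert (Hb : 0 < ell_bound a1 a2 x) by (apply eb_pos; auto).
    apply is_derive_ext with (f := fun x => RInt (fun t => F (x, t)) 0 (ell_bound a1 a2 x)
        + RInt (fun t => (fun z => F (fst z, - snd z)) (x, t)) 0 (ell_bound a1 a2 x)).
    { intros x'. simpl. rewrite RI_split_refl. reflexivity. intros; apply slice2_cont; auto. }
    rewrite RI_split_refl by (intros; apply slice2_cont; auto).
    apply (is_derive_plus (fun x => RInt (fun t => F (x, t)) 0 (ell_bound a1 a2 x))
       (fun x => RInt (fun t => (fun z => F (fst z, - snd z)) (x, t)) 0 (ell_bound a1 a2 x))
       x (RInt (fun t => G (x, t)) 0 (ell_bound a1 a2 x))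
       (RInt (fun t => (fun z => G (fst z, - snd z)) (x, t)) 0 (ell_bound a1 a2 x))).
    + apply leib_half; auto.
      * apply eb_deriv; auto.
      * apply H0. apply eb_Gamma; auto; lra.
      * intros s t Ht. apply (Hd (s, t)). apply eb_omega; auto. lra.
      * intros; apply eb_concave; auto.
    + apply (leib_half (fun z => F (fst z, - snd z)) (fun z => G (fst z, - snd z))); auto.
      * apply gc_refl; auto.
      * apply gc_refl; auto.
      * apply eb_deriv; auto.
      * simpl. apply H0. apply eb_Gamma; auto. lra. Rring.
      * intros s t Ht. simpl. apply (Hd (s, - t)). apply eb_omega; auto. lra.
      * intros; apply eb_concave; auto.
Qed.

Definition dth1 (a1 : R) (y : R * R) : R := -2 * fst y / a1 ^ 2.
Definition dth2 (a2 : R) (y : R * R) : R := -2 * snd y / a2 ^ 2.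
Definition dp1 a1 a2 p0 (y : R * R) : R := 2 * p0 * theta a1 a2 y * dth1 a1 y.
Definition dp2 a1 a2 p0 (y : R * R) : R := 2 * p0 * theta a1 a2 y * dth2 a2 y.
Definition dp11 a1 a2 p0 (y : R * R) : R := 2 * p0 * dth1 a1 y ^ 2 + 2 * p0 * theta a1 a2 y * (-2 / a1 ^ 2).
Definition dp22 a1 a2 p0 (y : R * R) : R := 2 * p0 * dth2 a2 y ^ 2 + 2 * p0 * theta a1 a2 y * (-2 / a2 ^ 2).

Lemma theta_d1 a1 a2 y : 0 < a1 -> 0 < a2 ->
  is_derive (fun t => theta a1 a2 (t, snd y)) (fst y) (dth1 a1 y).
Proof. intros. unfold theta, ellq, dth1; simpl. auto_derive. auto. unfold theta, ellq. field. lra. Qed.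

Lemma theta_d2 a1 a2 y : 0 < a1 -> 0 < a2 ->
  is_derive (fun t => theta a1 a2 (fst y, t)) (snd y) (dth2 a2 y).
Proof. intros. unfold theta, ellq, dth2; simpl. auto_derive. auto. unfold theta, ellq. field. lra. Qed.

Lemma dth1_d1 a1 y : 0 < a1 -> is_derive (fun t => dth1 a1 (t, snd y)) (fst y) (-2 / a1 ^ 2).
Proof. intros. unfold dth1; simpl. auto_derive. auto. unfold theta, ellq. field. lra. Qed.

Lemma dth2_d2 a2 y : 0 < a2 -> is_derive (fun t => dth2 a2 (fst y, t)) (snd y) (-2 / a2 ^ 2).
Proof. intros. unfold dth2; simpl. auto_derive. auto. unfold theta, ellq. field. lra. Qed.

Lemma pbar_d1 a1 a2 p0 z : 0 < a1 -> 0 < a2 -> Defs.d1 (pbar a1 a2 p0) z = dp1 a1 a2 p0 z.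
Proof.
  intros. unfold Defs.d1. apply is_derive_unique.
  unfold pbar, theta, ellq, dp1, dth1; simpl. auto_derive. auto. unfold theta, ellq. field. lra.
Qed.

Lemma pbar_d2 a1 a2 p0 z : 0 < a1 -> 0 < a2 -> Defs.d2 (pbar a1 a2 p0) z = dp2 a1 a2 p0 z.
Proof.
  intros. unfold Defs.d2. apply is_derive_unique.
  unfold pbar, theta, ellq, dp2, dth2; simpl. auto_derive. auto. unfold theta, ellq. field. lra.
Qed.

Lemma dp1_d1 a1 a2 p0 z : 0 < a1 -> 0 < a2 ->
  is_derive (fun t => dp1 a1 a2 p0 (t, snd z)) (fst z) (dp11 a1 a2 p0 z).
Proof. intros. unfold dp1, dp11, theta, ellq, dth1; simpl. auto_derive. auto. unfold theta, ellq. field. lra. Qed.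

Lemma dp2_d2 a1 a2 p0 z : 0 < a1 -> 0 < a2 ->
  is_derive (fun t => dp2 a1 a2 p0 (fst z, t)) (snd z) (dp22 a1 a2 p0 z).
Proof. intros. unfold dp2, dp22, theta, ellq, dth2; simpl. auto_derive. auto. unfold theta, ellq. field. lra. Qed.

Lemma div_eq a1 a2 p0 (H k1 k2 : R * R -> R) z : 0 < a1 -> 0 < a2 ->
  is_derive (fun t => H (t, snd z)) (fst z) (k1 z) ->
  is_derive (fun t => H (fst z, t)) (snd z) (k2 z) ->
  div_H_grad H (pbar a1 a2 p0) z =
    k1 z * dp1 a1 a2 p0 z + H z * dp11 a1 a2 p0 z + (k2 z * dp2 a1 a2 p0 z + H z * dp22 a1 a2 p0 z).
Proof.
  intros Ha1 Ha2 Hk1 Hk2. destruct z as [y1 y2]. simpl in *.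
  unfold div_H_grad. f_equal.
  - unfold Defs.d1 at 1. simpl.
    rewrite (Derive_ext _ (fun t => H (t, y2) * dp1 a1 a2 p0 (t, y2))) by (intros; rewrite pbar_d1; auto).
    apply is_derive_unique.
    apply (is_derive_mult (fun t => H (t, y2)) (fun t => dp1 a1 a2 p0 (t, y2))); auto.
    apply (dp1_d1 a1 a2 p0 (y1, y2)); auto.
    intros; apply Rmult_comm.
  - unfold Defs.d2 at 1. simpl.
    rewrite (Derive_ext _ (fun t => H (y1, t) * dp2 a1 a2 p0 (y1, t))) by (intros; rewrite pbar_d2; auto).
    apply is_derive_unique.
    apply (is_derive_mult (fun t => H (y1, t)) (fun t => dp2 a1 a2 p0 (y1, t))); auto.
    apply (dp2_d2 a1 a2 p0 (y1, y2)); auto.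
    intros; apply Rmult_comm.
Qed.


Lemma lap_eq a1 a2 (pt g1 g2 h11 h12 h21 h22 : R * R -> R) z : 0 < a1 -> 0 < a2 -> in_omega a1 a2 z ->
  partials_in_omega a1 a2 pt g1 g2 -> partials_in_omega a1 a2 g1 h11 h12 ->
  partials_in_omega a1 a2 g2 h21 h22 -> lap pt z = h11 z + h22 z.
Proof.
  intros Ha1 Ha2 Hz Hp Hp1 Hp2. unfold lap. f_equal.
  - unfold Defs.d1 at 1. apply is_derive_unique.
    apply is_derive_ext_loc with (f := fun t => g1 (t, snd z)).
    + eapply filter_imp; [|apply (omega_loc1 a1 a2 z Hz)]. intros t Ht.
      unfold Defs.d1; simpl. symmetry; apply is_derive_unique. apply (Hp (t, snd z) Ht).
    + apply (Hp1 z Hz).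
  - unfold Defs.d2 at 1. apply is_derive_unique.
    apply is_derive_ext_loc with (f := fun t => g2 (fst z, t)).
    + eapply filter_imp; [|apply (omega_loc2 a1 a2 z Hz)]. intros t Ht.
      unfold Defs.d2; simpl. symmetry; apply is_derive_unique. apply (Hp (fst z, t) Ht).
    + apply (Hp2 z Hz).
Qed.

Lemma theta_Gamma a1 a2 z : in_Gamma a1 a2 z -> theta a1 a2 z = 0.
Proof. unfold in_Gamma, theta. intros ->. ring. Qed.

Lemma mulC : forall n m : R_AbsRing, mult n m = mult m n.
Proof. intros; apply Rmult_comm. Qed.

Ltac gcT := let z := fresh "z" in intro z; unfold rho, dp1, dp2, dp11, dp22, dth1, dth2, theta, ellq, Rdiv; cbv zeta; repeat
  (match goal with H : gc ?f |- continuous ?f _ => apply H | H : gc ?f |- continuous (fun y => ?f y) _ => apply H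
   | _ => cont1 end).

Lemma is_derive_val (f : R -> R) x l l' : is_derive f x l -> l = l' -> is_derive f x l'.
Proof. intros; subst; auto. Qed.

Lemma Green1 a1 a2 (p q r : R * R -> R) : 0 < a1 -> 0 < a2 -> gc p -> gc q -> gc r ->
  (forall z, in_Gamma a1 a2 z -> p z = 0) ->
  (forall z, in_omega a1 a2 z -> is_derive (fun t => p (t, snd z)) (fst z) (q z)) ->
  (forall z, in_omega a1 a2 z -> is_derive (fun t => q (t, snd z)) (fst z) (r z)) ->
  int_omega a1 a2 (fun y => theta a1 a2 y * r y) = -2 / a1 ^ 2 * int_omega a1 a2 p.
Proof.
  intros Ha1 Ha2 Hp Hq Hr H0 Dp Dq.
  assert (E : int_omega a1 a2 (fun y => theta a1 a2 y * r y + 2 / a1 ^ 2 * p y) = 0).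
  { apply (L1 a1 a2 (fun y => theta a1 a2 y * q y - p y * dth1 a1 y)); auto.
    - gcT.
    - gcT.
    - intros z Hz. rewrite theta_Gamma, H0 by auto. ring.
    - intros [z1 z2] Hz. specialize (Dp _ Hz). specialize (Dq _ Hz). simpl in *.
      assert (D := is_derive_minus _ _ _ _ _
         (is_derive_mult _ _ _ _ _ (theta_d1 a1 a2 (z1, z2) Ha1 Ha2) Dq mulC)
         (is_derive_mult _ _ _ _ _ Dp (dth1_d1 a1 (z1, z2) Ha1) mulC)).
      simpl in D. eapply is_derive_val. eapply is_derive_ext; [|exact D]. intros; reflexivity.
      unfold minus, plus, mult, opp; simpl. field. lra. }
  rewrite io_plus, io_scal in E by gcT. lra.
Qed.

Lemma Green2 a1 a2 (p q r : R * R -> R) : 0 < a1 -> 0 < a2 -> gc p -> gc q -> gc r ->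
  (forall z, in_Gamma a1 a2 z -> p z = 0) ->
  (forall z, in_omega a1 a2 z -> is_derive (fun t => p (fst z, t)) (snd z) (q z)) ->
  (forall z, in_omega a1 a2 z -> is_derive (fun t => q (fst z, t)) (snd z) (r z)) ->
  int_omega a1 a2 (fun y => theta a1 a2 y * r y) = -2 / a2 ^ 2 * int_omega a1 a2 p.
Proof.
  intros Ha1 Ha2 Hp Hq Hr H0 Dp Dq.
  assert (E : int_omega a1 a2 (fun y => theta a1 a2 y * r y + 2 / a2 ^ 2 * p y) = 0).
  { apply (L2 a1 a2 (fun y => theta a1 a2 y * q y - p y * dth2 a2 y)); auto.
    - gcT.
    - gcT.
    - intros z Hz. rewrite theta_Gamma, H0 by auto. ring.
    - intros [z1 z2] Hz. specialize (Dp _ Hz). specialize (Dq _ Hz). simpl in *.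
      assert (D := is_derive_minus _ _ _ _ _
         (is_derive_mult _ _ _ _ _ (theta_d2 a1 a2 (z1, z2) Ha1 Ha2) Dq mulC)
         (is_derive_mult _ _ _ _ _ Dp (dth2_d2 a2 (z1, z2) Ha2) mulC)).
      simpl in D. eapply is_derive_val. eapply is_derive_ext; [|exact D]. intros; reflexivity.
      unfold minus, plus, mult, opp; simpl. field. lra. }
  rewrite io_plus, io_scal in E by gcT. lra.
Qed.

Lemma GreenH1 a1 a2 p0 (H k : R * R -> R) : 0 < a1 -> 0 < a2 -> gc H -> gc k ->
  (forall z, in_omega a1 a2 z -> is_derive (fun t => H (t, snd z)) (fst z) (k z)) ->
  int_omega a1 a2 (fun y => theta a1 a2 y * (k y * dp1 a1 a2 p0 y + H y * dp11 a1 a2 p0 y)) =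
  - int_omega a1 a2 (fun y => H y * dth1 a1 y * dp1 a1 a2 p0 y).
Proof.
  intros Ha1 Ha2 HH Hk Dk.
  assert (E : int_omega a1 a2 (fun y => theta a1 a2 y * (k y * dp1 a1 a2 p0 y + H y * dp11 a1 a2 p0 y)
       + 1 * (H y * dth1 a1 y * dp1 a1 a2 p0 y)) = 0).
  { apply (L1 a1 a2 (fun y => theta a1 a2 y * (H y * dp1 a1 a2 p0 y))); auto.
    - gcT.
    - gcT.
    - intros z Hz. rewrite theta_Gamma by auto. ring.
    - intros [z1 z2] Hz. specialize (Dk _ Hz). simpl in *.
      assert (D := is_derive_mult _ _ _ _ _ (theta_d1 a1 a2 (z1, z2) Ha1 Ha2)
         (is_derive_mult _ _ _ _ _ Dk (dp1_d1 a1 a2 p0 (z1, z2) Ha1 Ha2) mulC) mulC).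
      simpl in D. eapply is_derive_val. eapply is_derive_ext; [|exact D]. intros; reflexivity.
      unfold minus, plus, mult, opp; simpl. ring. }
  rewrite io_plus, io_scal in E by gcT. lra.
Qed.

Lemma GreenH2 a1 a2 p0 (H k : R * R -> R) : 0 < a1 -> 0 < a2 -> gc H -> gc k ->
  (forall z, in_omega a1 a2 z -> is_derive (fun t => H (fst z, t)) (snd z) (k z)) ->
  int_omega a1 a2 (fun y => theta a1 a2 y * (k y * dp2 a1 a2 p0 y + H y * dp22 a1 a2 p0 y)) =
  - int_omega a1 a2 (fun y => H y * dth2 a2 y * dp2 a1 a2 p0 y).
Proof.
  intros Ha1 Ha2 HH Hk Dk.
  assert (E : int_omega a1 a2 (fun y => theta a1 a2 y * (k y * dp2 a1 a2 p0 y + H y * dp22 a1 a2 p0 y)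
       + 1 * (H y * dth2 a2 y * dp2 a1 a2 p0 y)) = 0).
  { apply (L2 a1 a2 (fun y => theta a1 a2 y * (H y * dp2 a1 a2 p0 y))); auto.
    - gcT.
    - gcT.
    - intros z Hz. rewrite theta_Gamma by auto. ring.
    - intros [z1 z2] Hz. specialize (Dk _ Hz). simpl in *.
      assert (D := is_derive_mult _ _ _ _ _ (theta_d2 a1 a2 (z1, z2) Ha1 Ha2)
         (is_derive_mult _ _ _ _ _ Dk (dp2_d2 a1 a2 p0 (z1, z2) Ha1 Ha2) mulC) mulC).
      simpl in D. eapply is_derive_val. eapply is_derive_ext; [|exact D]. intros; reflexivity.
      unfold minus, plus, mult, opp; simpl. ring. }
  rewrite io_plus, io_scal in E by gcT. lra.
Qed.

Theorem mainTheorem1 :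
  forall (a1 a2 p0 m h1 h2 E1 E2 : R) (H1 H2 pt : R * R -> R),
    0 < a1 -> 0 < a2 -> 0 < p0 -> 0 < m ->
    0 < h1 -> 0 < h2 -> 0 < E1 -> 0 < E2 ->
    C1_closure a1 a2 H1 -> C1_closure a1 a2 H2 ->
    C2_closure a1 a2 pt ->
    (forall y, in_omega a1 a2 y ->
       - / m * lap pt y =
         3 * h1 ^ 2 / E1 * div_H_grad H1 (pbar a1 a2 p0) y
       + 3 * h2 ^ 2 / E2 * div_H_grad H2 (pbar a1 a2 p0) y) ->
    (forall y, in_Gamma a1 a2 y -> pt y = 0) ->
    (int_omega a1 a2 pt = 0 <->
       h1 ^ 2 / E1 * int_omega a1 a2 (fun y => H1 y * rho a1 a2 y)
     + h2 ^ 2 / E2 * int_omega a1 a2 (fun y => H2 y * rho a1 a2 y) = 0).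
Proof.
  intros a1 a2 p0 m h1 h2 E1 E2 H1 H2 pt Ha1 Ha2 Hp0 Hm Hh1 Hh2 HE1 HE2 HC1 HC2 HC Hpde Hbd.
  destruct HC as [Hptc [g1 [g2 [Hp [[Hg1c [h11 [h12 [Hp1 [Hh11c Hh12c]]]]] [Hg2c [h21 [h22 [Hp2 [Hh21c Hh22c]]]]]]]]]].
  destruct HC1 as [HH1c [k11 [k12 [Hk1 [Hk11c Hk12c]]]]].
  destruct HC2 as [HH2c [k21 [k22 [Hk2 [Hk21c Hk22c]]]]].
  assert (Hin : forall z, in_omega a1 a2 z -> Pr a1 a2 z = z) by (intros; apply Pr_id; auto; apply omega_closure; auto).
  pose (P := fun y => pt (Pr a1 a2 y)).
  pose (G1 := fun y => g1 (Pr a1 a2 y)). pose (G2 := fun y => g2 (Pr a1 a2 y)).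
  pose (R11 := fun y => h11 (Pr a1 a2 y)). pose (R22 := fun y => h22 (Pr a1 a2 y)).
  pose (Hb1 := fun y => H1 (Pr a1 a2 y)). pose (Hb2 := fun y => H2 (Pr a1 a2 y)).
  pose (K11 := fun y => k11 (Pr a1 a2 y)). pose (K12 := fun y => k12 (Pr a1 a2 y)).
  pose (K21 := fun y => k21 (Pr a1 a2 y)). pose (K22 := fun y => k22 (Pr a1 a2 y)).
  assert (gP : gc P) by exact (ext_cont a1 a2 pt Ha1 Ha2 Hptc).
  assert (gG1 : gc G1) by exact (ext_cont a1 a2 g1 Ha1 Ha2 Hg1c). assert (gG2 : gc G2) by exact (ext_cont a1 a2 g2 Ha1 Ha2 Hg2c).
  assert (gR11 : gc R11) by exact (ext_cont a1 a2 h11 Ha1 Ha2 Hh11c). assert (gR22 : gc R22) by exact (ext_cont a1 a2 h22 Ha1 Ha2 Hh22c).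
  assert (gHb1 : gc Hb1) by exact (ext_cont a1 a2 H1 Ha1 Ha2 HH1c). assert (gHb2 : gc Hb2) by exact (ext_cont a1 a2 H2 Ha1 Ha2 HH2c).
  assert (gK11 : gc K11) by exact (ext_cont a1 a2 k11 Ha1 Ha2 Hk11c). assert (gK12 : gc K12) by exact (ext_cont a1 a2 k12 Ha1 Ha2 Hk12c).
  assert (gK21 : gc K21) by exact (ext_cont a1 a2 k21 Ha1 Ha2 Hk21c). assert (gK22 : gc K22) by exact (ext_cont a1 a2 k22 Ha1 Ha2 Hk22c).
  assert (PG : forall z, in_Gamma a1 a2 z -> P z = 0).
  { intros z Hz. unfold P. rewrite Pr_id; auto. unfold in_closure; unfold in_Gamma in Hz; lra. }
  assert (Q1 : int_omega a1 a2 (fun y => theta a1 a2 y * R11 y) = -2 / a1 ^ 2 * int_omega a1 a2 P).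
  { apply (Green1 a1 a2 P G1 R11); auto.
    - intros z Hz. eapply is_derive_val. apply der_Pr1; auto. apply (proj1 (Hp z Hz)). unfold G1; rewrite Hin; auto.
    - intros z Hz. eapply is_derive_val. apply der_Pr1; auto. apply (proj1 (Hp1 z Hz)). unfold R11; rewrite Hin; auto. }
  assert (Q2 : int_omega a1 a2 (fun y => theta a1 a2 y * R22 y) = -2 / a2 ^ 2 * int_omega a1 a2 P).
  { apply (Green2 a1 a2 P G2 R22); auto.
    - intros z Hz. eapply is_derive_val. apply der_Pr2; auto. apply (proj2 (Hp z Hz)). unfold G2; rewrite Hin; auto.
    - intros z Hz. eapply is_derive_val. apply der_Pr2; auto. apply (proj2 (Hp2 z Hz)). unfold R22; rewrite Hin; auto. }
  assert (Q31 := GreenH1 a1 a2 p0 Hb1 K11 Ha1 Ha2 gHb1 gK11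
    ltac:(intros z Hz; eapply is_derive_val; [apply der_Pr1; auto; apply (proj1 (Hk1 z Hz))| unfold K11; rewrite Hin; auto])).
  assert (Q32 := GreenH2 a1 a2 p0 Hb1 K12 Ha1 Ha2 gHb1 gK12
    ltac:(intros z Hz; eapply is_derive_val; [apply der_Pr2; auto; apply (proj2 (Hk1 z Hz))| unfold K12; rewrite Hin; auto])).
  assert (Q41 := GreenH1 a1 a2 p0 Hb2 K21 Ha1 Ha2 gHb2 gK21
    ltac:(intros z Hz; eapply is_derive_val; [apply der_Pr1; auto; apply (proj1 (Hk2 z Hz))| unfold K21; rewrite Hin; auto])).
  assert (Q42 := GreenH2 a1 a2 p0 Hb2 K22 Ha1 Ha2 gHb2 gK22
    ltac:(intros z Hz; eapply is_derive_val; [apply der_Pr2; auto; apply (proj2 (Hk2 z Hz))| unfold K22; rewrite Hin; auto])).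
  assert (Q51 : int_omega a1 a2 (fun y => Hb1 y * dth1 a1 y * dp1 a1 a2 p0 y)
     + int_omega a1 a2 (fun y => Hb1 y * dth2 a2 y * dp2 a1 a2 p0 y)
     = 8 * p0 / (a1 * a2) * int_omega a1 a2 (fun y => Hb1 y * rho a1 a2 y)).
  { rewrite <- io_plus by gcT. rewrite <- io_scal by gcT. apply io_ext; auto. intros z _.
    unfold rho, dp1, dp2, dth1, dth2. cbv zeta. field. lra. }
  assert (Q52 : int_omega a1 a2 (fun y => Hb2 y * dth1 a1 y * dp1 a1 a2 p0 y)
     + int_omega a1 a2 (fun y => Hb2 y * dth2 a2 y * dp2 a1 a2 p0 y)
     = 8 * p0 / (a1 * a2) * int_omega a1 a2 (fun y => Hb2 y * rho a1 a2 y)).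
  { rewrite <- io_plus by gcT. rewrite <- io_scal by gcT. apply io_ext; auto. intros z _.
    unfold rho, dp1, dp2, dth1, dth2. cbv zeta. field. lra. }
  set (c1 := 3 * h1 ^ 2 / E1). set (c2 := 3 * h2 ^ 2 / E2).
  assert (QP : int_omega a1 a2 (fun y => theta a1 a2 y * (R11 y + R22 y)) =
     int_omega a1 a2 (fun y => (- m * c1) * (theta a1 a2 y * (K11 y * dp1 a1 a2 p0 y + Hb1 y * dp11 a1 a2 p0 y)
                + theta a1 a2 y * (K12 y * dp2 a1 a2 p0 y + Hb1 y * dp22 a1 a2 p0 y))
          + (- m * c2) * (theta a1 a2 y * (K21 y * dp1 a1 a2 p0 y + Hb2 y * dp11 a1 a2 p0 y)
                + theta a1 a2 y * (K22 y * dp2 a1 a2 p0 y + Hb2 y * dp22 a1 a2 p0 y)))).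
  { apply io_ext; auto. intros z Hz.
    unfold R11, R22, K11, K12, K21, K22, Hb1, Hb2. rewrite !Hin by auto.
    pose proof (Hpde z Hz) as E.
    rewrite (lap_eq a1 a2 pt g1 g2 h11 h12 h21 h22 z) in E by auto.
    rewrite (div_eq a1 a2 p0 H1 k11 k12 z) in E by (auto; try apply (proj1 (Hk1 z Hz)); apply (proj2 (Hk1 z Hz))).
    rewrite (div_eq a1 a2 p0 H2 k21 k22 z) in E by (auto; try apply (proj1 (Hk2 z Hz)); apply (proj2 (Hk2 z Hz))).
    fold c1 c2 in E.
    assert (E' : h11 z + h22 z = - m * (c1 * (k11 z * dp1 a1 a2 p0 z + H1 z * dp11 a1 a2 p0 z +
        (k12 z * dp2 a1 a2 p0 z + H1 z * dp22 a1 a2 p0 z)) + c2 * (k21 z * dp1 a1 a2 p0 z + H2 z * dp11 a1 a2 p0 z +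
        (k22 z * dp2 a1 a2 p0 z + H2 z * dp22 a1 a2 p0 z)))).
    { rewrite <- E. field. lra. }
    rewrite E'. ring. }
  rewrite (io_ext a1 a2 (fun y => theta a1 a2 y * (R11 y + R22 y))
     (fun y => theta a1 a2 y * R11 y + theta a1 a2 y * R22 y)) in QP by (auto; intros; ring).
  rewrite io_plus in QP by gcT.
  rewrite io_plus in QP by gcT. rewrite !io_scal in QP by gcT. rewrite !io_plus in QP by gcT.
  rewrite Q1, Q2, Q31, Q32, Q41, Q42 in QP.
  assert (EP : int_omega a1 a2 pt = int_omega a1 a2 P).
  { apply io_ext; auto. intros. unfold P. rewrite Hin; auto. }
  assert (EW1 : int_omega a1 a2 (fun y => H1 y * rho a1 a2 y) = int_omega a1 a2 (fun y => Hb1 y * rho a1 a2 y)).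
  { apply io_ext; auto. intros. unfold Hb1. rewrite Hin; auto. }
  assert (EW2 : int_omega a1 a2 (fun y => H2 y * rho a1 a2 y) = int_omega a1 a2 (fun y => Hb2 y * rho a1 a2 y)).
  { apply io_ext; auto. intros. unfold Hb2. rewrite Hin; auto. }
  rewrite EP, EW1, EW2.
  set (X := int_omega a1 a2 P) in *.
  set (W1 := int_omega a1 a2 (fun y => Hb1 y * rho a1 a2 y)) in *.
  set (W2 := int_omega a1 a2 (fun y => Hb2 y * rho a1 a2 y)) in *.
  set (A1 := int_omega a1 a2 (fun y => Hb1 y * dth1 a1 y * dp1 a1 a2 p0 y)) in *.
  set (B1 := int_omega a1 a2 (fun y => Hb1 y * dth2 a2 y * dp2 a1 a2 p0 y)) in *.
  set (A2 := int_omega a1 a2 (fun y => Hb2 y * dth1 a1 y * dp1 a1 a2 p0 y)) in *.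
  set (B2 := int_omega a1 a2 (fun y => Hb2 y * dth2 a2 y * dp2 a1 a2 p0 y)) in *.
  assert (B1e : B1 = 8 * p0 / (a1 * a2) * W1 - A1) by (rewrite <- Q51; ring).
  assert (B2e : B2 = 8 * p0 / (a1 * a2) * W2 - A2) by (rewrite <- Q52; ring).
  rewrite B1e, B2e in QP.
  assert (Hk : 0 < 3 * m * (8 * p0 / (a1 * a2))).
  { apply Rmult_lt_0_compat. lra. apply Rdiv_lt_0_compat. lra. apply Rmult_lt_0_compat; lra. }
  assert (Hc : 0 < 2 / a1 ^ 2 + 2 / a2 ^ 2).
  { assert (0 < 2 / a1 ^ 2) by (apply Rdiv_lt_0_compat; [lra| apply pow_lt; lra]).
    assert (0 < 2 / a2 ^ 2) by (apply Rdiv_lt_0_compat; [lra| apply pow_lt; lra]). lra. }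
  assert (Rel : (2 / a1 ^ 2 + 2 / a2 ^ 2) * X = - (3 * m * (8 * p0 / (a1 * a2))) * (h1 ^ 2 / E1 * W1 + h2 ^ 2 / E2 * W2)).
  { transitivity (- (-2 / a1 ^ 2 * X + -2 / a2 ^ 2 * X)). field. lra.
    rewrite QP. unfold c1, c2. field. lra. }
  split; intro HX.
  - rewrite HX, Rmult_0_r in Rel. symmetry in Rel. apply Rmult_integral in Rel. destruct Rel; auto. lra.
  - rewrite HX, Rmult_0_r in Rel. apply Rmult_integral in Rel. destruct Rel; auto. lra.
Qed.
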